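(* Let $M\in\mathrm{Mat}(d,\mathbb{Z})$ with $D=\det(M)$, and let $r\in\mathbb{N}$. (a) Let $p\neq2$ be a prime. If $M$ is reversible mod $p^r$, then $D\equiv\pm1\pmod{p^r}$. If $d=2$, then $M$ is reversible mod $p^r$ if and only if $D\equiv1\pmod{p^r}$ or $M^2\equiv\mathbb{1}\pmod{p^r}$. (b) If $M$ is reversible mod $2^r$, then $D\equiv\pm1\pmod{2^{r-1}}$. If moreover $d=2$, $r\ge2$, $M$ is reversible mod $2^r$ and $D\equiv-1\pmod{2^{r-1}}$, then $M^2\equiv\mathbb{1}\pmod{2^{r-2}}$.
   Context: An integer matrix $M$ whose determinant is a unit mod $n$ is reversible mod $n$ if there exists $R\in\mathrm{GL}(d,\mathbb{Z}/n\mathbb{Z})$ with $RMR^{-1}\equiv M^{-1}\pmod n$, where $M^{-1}$ is the inverse of $M$ over $\mathbb{Z}/n\mathbb{Z}$. *)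

(* Defs.v *)
From HB Require Import structures.
From mathcomp Require Import all_boot all_order all_algebra.
Set Implicit Arguments. Unset Strict Implicit. Unset Printing Implicit Defensive.
Import GRing.Theory Num.Theory.
Local Open Scope ring_scope.

Definition mxcong (n : nat) (d : nat) (A B : 'M[int]_d) : Prop :=
  forall i j, (A i j = B i j %[mod (n%:Z)])%Z.

(* Elements of Z/nZ (and GL(d,Z/nZ)) are represented by integer
   lifts; Rinv, Minv are integer lifts of the inverses mod n.  The existence
   of Minv is exactly the requirement that det M is a unit mod n. *)
Definition reversible_mod (n : nat) (d : nat) (M : 'M[int]_d) : Prop :=
  exists R Rinv Minv : 'M[int]_d,
    [/\ mxcong n (R *m Rinv) 1%:M, mxcong n (Rinv *m R) 1%:M,
        mxcong n (M *m Minv) 1%:M, mxcong n (Minv *m M) 1%:M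
      & mxcong n (R *m M *m Rinv) Minv].

(* Main.v *)
Require Import Defs.
From HB Require Import structures.
From mathcomp Require Import all_boot all_order all_algebra.
From mathcomp Require Import ring zify.
Import GRing.Theory Num.Theory.
Local Open Scope ring_scope.

Lemma Zn_int0 n (n1 : (1 < n)%N) (z : int) :
  ((z%:~R : 'Z_n) == 0) = (n%:Z %| z)%Z.
Proof.
case: z => m.
  rewrite -pmulrn dvdzE /= -(inj_eq val_inj) /= (val_Zp_nat n1).
  by rewrite /dvdn.
rewrite NegzE mulrNz oppr_eq0 -pmulrn dvdzE /= -(inj_eq val_inj) /= (val_Zp_nat n1).
by rewrite /dvdn.
Qed.

Lemma Zn_eq n (n1 : (1 < n)%N) (a b : int) :
  (a%:~R = b%:~R :> 'Z_n) <-> (a = b %[mod n%:Z])%Z.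
Proof.
split=> [H|H].
  apply/eqP; rewrite eqz_mod_dvd -Zn_int0 // intrB H subrr //.
apply/eqP; rewrite -subr_eq0 -intrB Zn_int0 // -eqz_mod_dvd; exact/eqP.
Qed.

Arguments Zn_eq {n} n1 a b.
Arguments Zn_int0 {n} n1 z.

Definition phi n d (A : 'M[int]_d) : 'M['Z_n]_d := map_mx (intr : int -> 'Z_n) A.
Arguments phi n {d}.

Lemma mxcongP n (n1 : (1 < n)%N) d (A B : 'M[int]_d) :
  mxcong n A B <-> phi n A = phi n B.
Proof.
split=> [H|H].
  apply/matrixP=> i j; rewrite /phi !mxE; exact: (proj2 (Zn_eq n1 _ _) (H i j)).
move=> i j; apply: (proj1 (Zn_eq n1 _ _)); move/matrixP: H => /(_ i j); by rewrite /phi !mxE.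
Qed.

Arguments mxcongP {n} n1 {d A B}.

Lemma phiM n d (A B : 'M[int]_d) : phi n (A *m B) = phi n A *m phi n B.
Proof. by rewrite /phi map_mxM. Qed.

Lemma phi1 n d : phi n (1%:M : 'M[int]_d) = 1%:M.
Proof. by apply/matrixP=> i j; rewrite !mxE; case: (i == j). Qed.

Lemma phi_det n d (A : 'M[int]_d) : \det (phi n A) = (\det A)%:~R.
Proof. by rewrite /phi det_map_mx. Qed.

Lemma mxcong1 d (A B : 'M[int]_d) : mxcong 1 A B.
Proof. by move=> i j; rewrite !modz1. Qed.

Lemma mxcong_dvd k n d (A B : 'M[int]_d) : (k %| n)%N -> mxcong n A B -> mxcong k A B.
Proof.
move=> kn H i j; move: (H i j) => /eqP; rewrite eqz_mod_dvd => h.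
apply/eqP; rewrite eqz_mod_dvd; apply: dvdz_trans h; by rewrite dvdzE.
Qed.

Lemma rev_det n d (M : 'M[int]_d) : (0 < n)%N -> reversible_mod n M ->
  (\det M * \det M = 1 %[mod n%:Z])%Z.
Proof.
move=> n0 [R [Ri [Mi [h1 h2 h3 h4 h5]]]].
case: (ltngtP n 1) => [n0'|n1|->]; first by lia.
  move/(mxcongP n1): h1; move/(mxcongP n1): h3; move/(mxcongP n1): h5.
  rewrite !phiM phi1 => e5 e3 e1.
  apply/(Zn_eq n1); rewrite intrM -!phi_det.
  have d1 := congr1 determinant e1; have d3 := congr1 determinant e3.
  have d5 := congr1 determinant e5.
  rewrite !det_mulmx det1 in d1 d3 d5.
  rewrite (_ : (1%:~R : 'Z_n) = 1) // -d3 -d5; congr (_ * _).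
  by rewrite mulrAC d1 mul1r.
by rewrite !modz1.
Qed.

Lemma coprimez_pow p r (x : int) : prime p -> ~~ (p%:Z %| x)%Z ->
  coprimez (p ^ r)%N%:Z x.
Proof.
move=> pp h; rewrite coprimezE /=; apply: coprimeXl.
by rewrite prime_coprime // -dvdzE.
Qed.

Lemma sq1_odd p r (D : int) : prime p -> p != 2%N ->
  (D * D = 1 %[mod (p ^ r)%N%:Z])%Z ->
  (D = 1 %[mod (p ^ r)%N%:Z])%Z \/ (D = -1 %[mod (p ^ r)%N%:Z])%Z.
Proof.
move=> pp p2 /eqP; rewrite eqz_mod_dvd => h.
have e : D * D - 1 = (D - 1) * (D + 1) by ring.
rewrite e in h.
have [h1|h1] := boolP (p%:Z %| D - 1)%Z.
  have h2 : ~~ (p%:Z %| D + 1)%Z.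
    apply/negP=> h2.
    have : (p%:Z %| (D + 1) - (D - 1))%Z by rewrite rpredB.
    rewrite (_ : (D + 1) - (D - 1) = 2%:Z); last by ring.
    rewrite dvdzE /= => /dvdn_leq => /(_ isT) hp.
    have := prime_gt1 pp; move: p2; lia.
  left; apply/eqP; rewrite eqz_mod_dvd.
  by rewrite -(Gauss_dvdzl _ (coprimez_pow _ r _ pp h2)).
right; apply/eqP; rewrite eqz_mod_dvd opprK.
by rewrite -(Gauss_dvdzr _ (coprimez_pow _ r _ pp h1)).
Qed.

Lemma sq1_two r (D : int) :
  (D * D = 1 %[mod (2 ^ r)%N%:Z])%Z ->
  (D = 1 %[mod (2 ^ (r - 1))%N%:Z])%Z \/ (D = -1 %[mod (2 ^ (r - 1))%N%:Z])%Z.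
Proof.
case: r => [|[|k]] /=; first by rewrite !modz1; left.
  by rewrite !modz1; left.
move/eqP; rewrite eqz_mod_dvd => h.
rewrite subSS subn0.
have e : D * D - 1 = (D - 1) * (D + 1) by ring.
rewrite e in h.
have h2 : (2%:Z %| (D - 1) * (D + 1))%Z.
  apply: dvdz_trans h; rewrite dvdzE /= expnS. exact: dvdn_mulr.
have ev : (2%:Z %| D - 1)%Z.
  move: h2; rewrite dvdzE abszM Euclid_dvdM // -!dvdzE => /orP [//|h3].
  have -> : D - 1 = (D + 1) - 2%:Z by ring.
  by rewrite rpredB.
case/dvdzP: ev => a ea.
have eb : D + 1 = (a + 1) * 2%:Z by rewrite -[D](subrK 1) ea; ring.
rewrite ea eb in h.
have h' : (4%:Z * (2 ^ k)%N%:Z %| 4%:Z * (a * (a + 1)))%Z.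
  rewrite (_ : 4%:Z * (2 ^ k)%N%:Z = (2 ^ k.+2)%N%:Z); last first.
    by rewrite !expnS PoszM PoszM mulrA.
  rewrite (_ : 4%:Z * (a * (a + 1)) = a * 2%:Z * ((a + 1) * 2%:Z)) //; ring.
rewrite dvdz_mul2l // in h'.
have pow2 : (2 ^ k.+1)%N%:Z = (2 ^ k)%N%:Z * 2%:Z by rewrite expnS PoszM mulrC.
have [ha|ha] := boolP (2%:Z %| a)%Z.
  have hb : ~~ (2%:Z %| a + 1)%Z.
    apply/negP=> hb; have : (2%:Z %| (a + 1) - a)%Z by rewrite rpredB.
    by rewrite addrAC subrr add0r.
  left; apply/eqP; rewrite eqz_mod_dvd ea pow2 dvdz_mul2r //.
  by rewrite -(Gauss_dvdzl _ (coprimez_pow 2 k _ isT hb)).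
right; apply/eqP; rewrite eqz_mod_dvd opprK eb pow2 dvdz_mul2r //.
by rewrite -(Gauss_dvdzr _ (coprimez_pow 2 k _ isT ha)).
Qed.

Definition mx2 (R : Type) (a b c e : R) : 'M[R]_2 :=
  \matrix_(i, j) if i == ord0 then (if j == ord0 then a else b)
                 else (if j == ord0 then c else e).
Arguments mx2 {R}.

Lemma mx2E (R : Type) (a b c e : R) (i j : 'I_2) :
  mx2 a b c e i j = if i == ord0 then (if j == ord0 then a else b)
                 else (if j == ord0 then c else e).
Arguments mx2 {R}.
Proof. by rewrite mxE. Qed.

Lemma mx2_eta (R : Type) (A : 'M[R]_2) :
  A = mx2 (A ord0 ord0) (A ord0 ord_max) (A ord_max ord0) (A ord_max ord_max).
Proof.
apply/matrixP=> i j; rewrite mx2E.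
case: i => [[|[|i]] Hi]; case: j => [[|[|j]] Hj] //=; congr (A _ _); exact: val_inj.
Qed.

Arguments mx2_eta {R}.

Section M2.
Variable R : comPzRingType.


Lemma mx2_mul (a b c e a' b' c' e' : R) :
  mx2 a b c e *m mx2 a' b' c' e' =
  mx2 (a*a'+b*c') (a*b'+b*e') (c*a'+e*c') (c*b'+e*e').
Proof.
apply/matrixP=> i j; rewrite !mxE !big_ord_recl big_ord0 !mx2E /=.
by case: i => [[|[|i]] Hi]; case: j => [[|[|j]] Hj] //=; rewrite addr0.
Qed.

Lemma mx2_1 : (1%:M : 'M[R]_2) = mx2 1 0 0 1.
Proof.
apply/matrixP=> i j; rewrite !mxE.
by case: i => [[|[|i]] Hi]; case: j => [[|[|j]] Hj].
Qed.

Lemma mx2_scale (k a b c e : R) : k *: mx2 a b c e = mx2 (k*a) (k*b) (k*c) (k*e).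
Proof.
apply/matrixP=> i j; rewrite !mxE.
by case: (i == ord0); case: (j == ord0).
Qed.

Lemma mx2_add (a b c e a' b' c' e' : R) :
  mx2 a b c e + mx2 a' b' c' e' = mx2 (a+a') (b+b') (c+c') (e+e').
Proof.
apply/matrixP=> i j; rewrite !mxE.
by case: (i == ord0); case: (j == ord0).
Qed.

Lemma det_mx2 (a b c e : R) : \det (mx2 a b c e) = a * e - b * c.
Proof.
rewrite (expand_det_row _ ord0) !big_ord_recl big_ord0 /cofactor !det_mx11 !mxE /=.
rewrite !expr0 !expr1; ring.
Qed.

Lemma tr_mx2 (a b c e : R) : \tr (mx2 a b c e) = a + e.
Proof. by rewrite /mxtrace !big_ord_recl big_ord0 !mxE /= addr0. Qed.

End M2.

Lemma mx2_inj (T : Type) (a b c e a' b' c' e' : T) :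
  mx2 a b c e = mx2 a' b' c' e' -> [/\ a = a', b = b', c = c' & e = e'].
Proof.
move=> H.
have h := fun i j => congr1 (fun A : 'M_2 => A i j) H.
move: (h ord0 ord0) (h ord0 ord_max) (h ord_max ord0) (h ord_max ord_max).
by rewrite !mx2E /=.
Qed.

Lemma phi_mx2 n (a b c e : int) :
  phi n (mx2 a b c e) = mx2 a%:~R b%:~R c%:~R e%:~R.
Proof.
apply/matrixP=> i j; rewrite /phi !mxE.
by case: (i == ord0); case: (j == ord0).
Qed.

Lemma mxcong_mx2 n (a b c e a' b' c' e' : int) :
  (a = a' %[mod n%:Z])%Z -> (b = b' %[mod n%:Z])%Z ->
  (c = c' %[mod n%:Z])%Z -> (e = e' %[mod n%:Z])%Z ->
  mxcong n (mx2 a b c e) (mx2 a' b' c' e').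
Proof.
move=> h1 h2 h3 h4 i j; rewrite !mx2E.
by case: (i == ord0); case: (j == ord0).
Qed.

Lemma adj_mx2 (T : comPzRingType) (a b c e : T) :
  \adj (mx2 a b c e) = mx2 e (- b) (- c) a.
Proof.
apply/matrixP=> i j; rewrite !mxE /cofactor det_mx11 !mxE.
case: i => [[|[|i]] Hi]; case: j => [[|[|j]] Hj] //=;
  rewrite ?expr0 ?expr1 ?exprS ?expr0 /= ?mul1r ?mulN1r ?mulr1 ?mulNr ?opprK ?mul1r //.
Qed.

Lemma key2 (T : comPzRingType) (a b c e : T) (R Ri Mi : 'M[T]_2) :
  Ri *m R = 1%:M -> mx2 a b c e *m Mi = 1%:M -> R *m mx2 a b c e *m Ri = Mi ->
  a * e - b * c = -1 -> ((a + e) *+ 2 = 0) /\ Mi = mx2 (-e) b c (-a).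
Proof.
move=> h2 h3 h5 hd.
have hMi : Mi = mx2 (-e) b c (-a).
  have : \adj (mx2 a b c e) = - Mi.
    rewrite -[LHS]mulmx1 -h3 mulmxA mul_adj_mx det_mx2 hd mul_scalar_mx.
    by rewrite scaleN1r.
  rewrite adj_mx2 => /(congr1 (fun A => - A)); rewrite opprK => <-.
  rewrite -scaleN1r mx2_scale; congr mx2; ring.
split=> //.
have ht : \tr Mi = \tr (mx2 a b c e).
  by rewrite -h5 mxtrace_mulC mulmxA h2 mul1mx.
rewrite hMi !tr_mx2 in ht.
by rewrite mulr2n -{1}ht; ring.
Qed.

Arguments sq1_odd {p r D}.
Arguments sq1_two {r D}.
Arguments rev_det {n d M}.

Lemma pow_gt1 p r : (1 < p)%N -> (1 < p ^ r.+1)%N.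
Proof. by move=> p1; rewrite -[1%N](expn0 p) ltn_exp2l. Qed.

Lemma not_dvd2 p : prime p -> p != 2%N -> ~~ (p%:Z %| 2%:Z)%Z.
Proof.
move=> pp p2; apply/negP; rewrite dvdzE /= => /dvdn_leq => /(_ isT) hp.
have := prime_gt1 pp; move: p2; lia.
Qed.

Lemma fwd_odd p r (M : 'M[int]_2) : prime p -> p != 2%N ->
  reversible_mod (p ^ r) M ->
  (\det M = 1 %[mod (p ^ r)%N%:Z])%Z \/ mxcong (p ^ r) (M *m M) 1%:M.
Proof.
move=> pp p2 hrev.
have p0 : (0 < p ^ r)%N by rewrite expn_gt0 prime_gt0.
have := sq1_odd pp p2 (rev_det p0 hrev).
case=> h; [by left | right].
clear p0; case: r hrev h => [|r] hrev h; first by rewrite expn0; exact: mxcong1.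
have n1 := pow_gt1 _ r (prime_gt1 pp).
move: hrev => [R [Ri [Mi [h1 h2 h3 h4 h5]]]].
rewrite (mx2_eta M) in h3 h5 h *.
move: h3 h5 h2 => /(mxcongP n1) h3 /(mxcongP n1) h5 /(mxcongP n1) h2.
rewrite !phiM phi1 phi_mx2 in h3 h5 h2.
rewrite det_mx2 in h.
move/(Zn_eq n1): h; rewrite intrB !intrM mulrN1z => hd.
have [ht hMi] := key2 _ _ _ _ _ _ _ _ h2 h3 h5 hd.
have ht0 : ((M ord0 ord0 + M ord_max ord_max)%:~R : 'Z_(p ^ r.+1)) = 0.
  apply/eqP; rewrite (Zn_int0 n1).
  rewrite -(Gauss_dvdzl _ (coprimez_pow _ r.+1 _ pp (not_dvd2 _ pp p2))).
  by rewrite -(Zn_int0 n1) intrM intrD -ht -mulr_natr.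
apply/(mxcongP n1); rewrite phiM phi1 phi_mx2 -h3 hMi; congr (_ *m mx2 _ _ _ _).
  by apply/eqP; rewrite -addr_eq0 -intrD ht0.
by apply/eqP; rewrite -addr_eq0 addrC -intrD ht0.
Qed.

Lemma rev_dvd k n d (M : 'M[int]_d) : (k %| n)%N -> reversible_mod n M -> reversible_mod k M.
Proof.
move=> kn [R [Ri [Mi [h1 h2 h3 h4 h5]]]]; exists R, Ri, Mi.
by split; apply: mxcong_dvd kn _.
Qed.

Lemma fwd_two r (M : 'M[int]_2) : (2 <= r)%N -> reversible_mod (2 ^ r) M ->
  (\det M = -1 %[mod (2 ^ (r - 1))%N%:Z])%Z ->
  mxcong (2 ^ (r - 2)) (M *m M) 1%:M.
Proof.
case: r => [|[|k]] //= _ hrev; rewrite !subSS !subn0 => h.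
have hrev' : reversible_mod (2 ^ k.+1) M.
  by apply: rev_dvd hrev; rewrite dvdn_exp2l.
have n1 := pow_gt1 2 k isT.
move: hrev' => [R [Ri [Mi [h1 h2 h3 h4 h5]]]].
rewrite (mx2_eta M) in h3 h5 h *.
set a := M ord0 ord0 in h3 h5 h *; set b := M ord0 ord_max in h3 h5 h *.
set c := M ord_max ord0 in h3 h5 h *; set e := M ord_max ord_max in h3 h5 h *.
move: h3 h5 h2 => /(mxcongP n1) h3 /(mxcongP n1) h5 /(mxcongP n1) h2.
rewrite !phiM phi1 phi_mx2 in h3 h5 h2.
rewrite det_mx2 in h.
move/(Zn_eq n1): h; rewrite intrB !intrM mulrN1z => hd.
have [ht hMi] := key2 _ _ _ _ _ _ _ _ h2 h3 h5 hd.
have h3' : mxcong (2 ^ k.+1) (mx2 a b c e *m mx2 (-e) b c (-a)) 1%:M.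
  by apply/(mxcongP n1); rewrite phiM phi1 !phi_mx2 !intrN -hMi.
have htk : ((2 ^ k)%N%:Z %| a + e)%Z.
  have : ((2 ^ k.+1)%N%:Z %| (a + e) * 2%:Z)%Z.
    by rewrite -(Zn_int0 n1) intrM intrD -ht -mulr_natr.
  by rewrite expnS PoszM (mulrC (a + e)) dvdz_mul2l.
have h3k := mxcong_dvd _ _ _ _ _ (dvdn_exp2l 2 (leqnSn k)) h3'.
case: k htk h3k {h1 h2 h3 h4 h5 h3' R Ri Mi ht hMi hd n1 hrev} => [|k] htk h3k.
  by rewrite expn0; exact: mxcong1.
have n1 := pow_gt1 2 k isT.
move/(mxcongP n1): h3k; rewrite phiM phi1 !phi_mx2 => h3k.
apply/(mxcongP n1); rewrite phiM phi1 phi_mx2 -h3k.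
have ht0 : ((a + e)%:~R : 'Z_(2 ^ k.+1)) = 0 by apply/eqP; rewrite (Zn_int0 n1).
congr (_ *m mx2 _ _ _ _).
  by apply/eqP; rewrite intrN -addr_eq0 -intrD ht0.
by apply/eqP; rewrite intrN -addr_eq0 addrC -intrD ht0.
Qed.

Lemma dvdz_primeM p (x y : int) : prime p ->
  (p%:Z %| x * y)%Z = (p%:Z %| x)%Z || (p%:Z %| y)%Z.
Proof. by move=> pp; rewrite !dvdzE abszM Euclid_dvdM. Qed.

Lemma find_R p (a b c e : int) : prime p -> exists x y z : int,
  (a - e) * x + c * y + b * z = 0 /\ ~~ (p%:Z %| x * x + y * z)%Z.
Proof.
move=> pp.
have np1 : ~~ (p%:Z %| 1)%Z.
  by rewrite dvdzE /= dvdn1; apply/negP => /eqP p1; rewrite p1 in pp.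
have [hz|hnz] := boolP [&& a - e == 0, b == 0 & c == 0].
  case/and3P: hz => /eqP -> /eqP -> /eqP ->; exists 1, 0, 0.
  by rewrite !mul0r !addr0 mulr1.
pose g : int := gcdz (gcdz (a - e) b) c.
have gu : (g %| a - e)%Z := dvdz_trans (dvdz_gcdl _ _) (dvdz_gcdl _ _).
have gb : (g %| b)%Z := dvdz_trans (dvdz_gcdl _ _) (dvdz_gcdr _ _).
have gc : (g %| c)%Z := dvdz_gcdr _ _.
have g0 : g != 0.
  apply: contra hnz => /eqP g0.
  rewrite g0 in gu gb gc.
  by move: gu gb gc; rewrite !dvdzE /= !dvd0n !absz_eq0 => -> -> ->.
set u' := ((a - e) %/ g)%Z; set b' := (b %/ g)%Z; set c' := (c %/ g)%Z.
have eu : a - e = u' * g by rewrite divzK.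
have eb : b = b' * g by rewrite divzK.
have ec : c = c' * g by rewrite divzK.
have notall : ~~ [&& p%:Z %| u', p%:Z %| b' & p%:Z %| c']%Z.
  apply/negP => /and3P [h1 h2 h3].
  have hg : (p%:Z * g %| g)%Z.
    have := dvdz_gcd (p%:Z * g) (gcdz (a - e) b) c; rewrite -/g => ->.
    rewrite dvdz_gcd eu eb ec !dvdz_mul //.
  move: hg; have := @dvdz_mul2r g p%:Z 1 g0; rewrite mul1r => ->.
  by rewrite (negbTE np1).
rewrite eu eb ec.
have [hb|hb] := boolP (p%:Z %| b')%Z; last first.
  exists b', 0, (- u'); split; first ring.
  by rewrite mul0r addr0 dvdz_primeM // orbb.
have [hc|hc] := boolP (p%:Z %| c')%Z; last first.
  exists c', (- u'), 0; split; first ring.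
  by rewrite mulr0 addr0 dvdz_primeM // orbb.
have hu : ~~ (p%:Z %| u')%Z by move: notall; rewrite hb hc !andbT.
exists (b' - c'), u', (- u'); split; first ring.
apply/negP => hd.
have hbc : (p%:Z %| (b' - c') * (b' - c'))%Z by rewrite dvdz_mulr // rpredB.
have : (p%:Z %| (b' - c') * (b' - c') - ((b' - c') * (b' - c') + u' * - u'))%Z.
  by rewrite rpredB.
rewrite (_ : _ - _ = u' * u'); last by ring.
by rewrite dvdz_primeM // orbb (negbTE hu).
Qed.

Lemma cong_k n (k x : int) : (k = 1 %[mod n])%Z -> (x * k = x %[mod n])%Z.
Proof. by move=> hk; rewrite -modzMmr hk modzMmr mulr1. Qed.

Lemma bwd p r (M : 'M[int]_2) : prime p ->
  (\det M = 1 %[mod (p ^ r)%N%:Z])%Z -> reversible_mod (p ^ r) M.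
Proof.
move=> pp h.
rewrite (mx2_eta M) in h *.
set a := M ord0 ord0 in h *; set b := M ord0 ord_max in h *.
set c := M ord_max ord0 in h *; set e := M ord_max ord_max in h *.
rewrite det_mx2 in h.
have [x [y [z [heq hnd]]]] := find_R _ a b c e pp.
have cop := coprimez_pow _ r _ pp hnd.
have [u0 [v0 hb]] := Bezoutz (p ^ r)%N%:Z (x * x + y * z).
move: cop; rewrite /coprimez => /eqP g1; rewrite g1 in hb.
set k := v0 * (x * x + y * z).
have hk : (k = 1 %[mod (p ^ r)%N%:Z])%Z by rewrite -hb modzMDl.
exists (mx2 x y z (- x)), (mx2 (v0 * x) (v0 * y) (v0 * z) (- (v0 * x))),
  (mx2 e (- b) (- c) a).
have E1 : mx2 x y z (- x) *m mx2 (v0 * x) (v0 * y) (v0 * z) (- (v0 * x))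
    = mx2 (1 * k) (0 * k) (0 * k) (1 * k).
  by rewrite mx2_mul /k; congr mx2; ring.
have E2 : mx2 (v0 * x) (v0 * y) (v0 * z) (- (v0 * x)) *m mx2 x y z (- x)
    = mx2 (1 * k) (0 * k) (0 * k) (1 * k).
  by rewrite mx2_mul /k; congr mx2; ring.
have E3 : mx2 a b c e *m mx2 e (- b) (- c) a
    = mx2 (1 * (a * e - b * c)) 0 0 (1 * (a * e - b * c)).
  by rewrite mx2_mul; congr mx2; ring.
have E4 : mx2 e (- b) (- c) a *m mx2 a b c e
    = mx2 (1 * (a * e - b * c)) 0 0 (1 * (a * e - b * c)).
  by rewrite mx2_mul; congr mx2; ring.
have RM : mx2 x y z (- x) *m mx2 a b c e = mx2 e (- b) (- c) a *m mx2 x y z (- x).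
  rewrite !mx2_mul; congr mx2; try ring.
    by apply/eqP; rewrite -subr_eq0 -heq; apply/eqP; ring.
  by apply/eqP; rewrite -subr_eq0 -heq; apply/eqP; ring.
have E5 : mx2 x y z (- x) *m mx2 a b c e *m
      mx2 (v0 * x) (v0 * y) (v0 * z) (- (v0 * x))
    = mx2 (e * k) (- b * k) (- c * k) (a * k).
  rewrite RM -mulmxA E1 mx2_mul; congr mx2; ring.
rewrite E1 E2 E3 E4 E5 mx2_1.
split; apply: mxcong_mx2; rewrite ?mul0r ?mod0z //; try exact: cong_k.
all: by rewrite mul1r.
Qed.

Lemma bwd_sq n (M : 'M[int]_2) : mxcong n (M *m M) 1%:M -> reversible_mod n M.
Proof.
move=> h; exists 1%:M, 1%:M, M; rewrite !mul1mx !mulmx1.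
by split=> // i j.
Qed.

Theorem lemma4p11 :
  (* (a) *)
  (forall (p r : nat), prime p -> p != 2%N ->
     (forall (d : nat) (M : 'M[int]_d), reversible_mod (p ^ r) M ->
        (\det M = 1 %[mod (p ^ r)%N%:Z])%Z \/ (\det M = -1 %[mod (p ^ r)%N%:Z])%Z)
     /\
     (forall M : 'M[int]_2, reversible_mod (p ^ r) M <->
        ((\det M = 1 %[mod (p ^ r)%N%:Z])%Z \/ mxcong (p ^ r) (M *m M) 1%:M)))
  /\
  (* (b) *)
  (forall (r : nat),
     (forall (d : nat) (M : 'M[int]_d), reversible_mod (2 ^ r) M ->
        (\det M = 1 %[mod (2 ^ (r - 1))%N%:Z])%Z
        \/ (\det M = -1 %[mod (2 ^ (r - 1))%N%:Z])%Z)
     /\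
     (forall M : 'M[int]_2, (2 <= r)%N -> reversible_mod (2 ^ r) M ->
        (\det M = -1 %[mod (2 ^ (r - 1))%N%:Z])%Z ->
        mxcong (2 ^ (r - 2)) (M *m M) 1%:M)).
Proof.
split.
  move=> p r pp p2; split.
    move=> d M hrev.
    have p0 : (0 < p ^ r)%N by rewrite expn_gt0 prime_gt0.
    exact: sq1_odd pp p2 (rev_det p0 hrev).
  move=> M; split; first exact: fwd_odd.
  by case=> h; [exact: bwd | exact: bwd_sq].
move=> r; split.
  move=> d M hrev.
  have p0 : (0 < 2 ^ r)%N by rewrite expn_gt0.
  exact: sq1_two (rev_det p0 hrev).
move=> M hr hrev h; exact: fwd_two.
Qed.
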